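(* Let $L\ge2$, $w\in\mathbb R\setminus\{0\}$, $\theta\in\mathbb R$, and consider on $\mathcal F(\mathbb C^L)$ the Hamiltonians, for $\alpha\in[0,\pi]$, $$\mathbf H^{\mathrm{Kit}}_\Lambda(\alpha)=w\sum_{j=1}^{L-1}\big(-{\mathfrak a}_j^*{\mathfrak a}_{j+1}-{\mathfrak a}_{j+1}^*{\mathfrak a}_j+e^{i\theta}{\mathfrak a}_j{\mathfrak a}_{j+1}+e^{-i\theta}{\mathfrak a}_{j+1}^*{\mathfrak a}_j^*\big)+w\big(-e^{-i\alpha}{\mathfrak a}_L^*{\mathfrak a}_1-e^{i\alpha}{\mathfrak a}_1^*{\mathfrak a}_L+e^{i\theta}e^{i\alpha}{\mathfrak a}_L{\mathfrak a}_1+e^{-i\theta}e^{-i\alpha}{\mathfrak a}_1^*{\mathfrak a}_L^*\big)$$ (the Kitaev chain with $\mu=0$, $\Delta=e^{i\theta}w$ and a flux $\alpha$ inserted in the boundary bond). Then the $\mathbb Z_2$-valued spectral flow of the path $\alpha\in[0,\pi]\mapsto\mathbf H^{\mathrm{Kit}}_\Lambda(\alpha)$ is non-trivial, i.e. $\mathrm{Sf}_2(A_\Lambda(0),A_\Lambda(\pi))=-1$.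
   Context: $\mathcal F(\mathbb C^L)$ is the fermionic Fock space with CAR operators ${\mathfrak a}_j$, $j=1,\dots,L$. Majorana operators: ${\mathfrak b}_{2j-1}=e^{i\theta/2}{\mathfrak a}_j+e^{-i\theta/2}{\mathfrak a}_j^*$, ${\mathfrak b}_{2j}=-ie^{i\theta/2}{\mathfrak a}_j+ie^{-i\theta/2}{\mathfrak a}_j^*$, ordered as ${\mathfrak b}=({\mathfrak b}_1,{\mathfrak b}_3,\dots,{\mathfrak b}_{2L-1},{\mathfrak b}_2,\dots,{\mathfrak b}_{2L})^t$. In these variables $\mathbf H^{\mathrm{Kit}}_\Lambda(\alpha)=iw\sum_{j=1}^{L-1}{\mathfrak b}_{2j}{\mathfrak b}_{2j+1}+iw\cos(\alpha){\mathfrak b}_{2L}{\mathfrak b}_1-iw\sin(\alpha){\mathfrak b}_{2L}{\mathfrak b}_2$, and $A_\Lambda(\alpha)$ denotes the unique real skew-symmetric matrix with $\mathbf H^{\mathrm{Kit}}_\Lambda(\alpha)=\frac i2{\mathfrak b}^tA_\Lambda(\alpha){\mathfrak b}$. For invertible real skew-symmetric $T_0,T_1$, $\mathrm{Sf}_2(T_0,T_1)=\mathrm{sgn}\det(M)$ for any invertible real $M$ with $T_1=MT_0M^*$; the $\mathbb Z_2$-valued spectral flow of a path with invertible endpoints is $\mathrm{Sf}_2$ of its endpoints. *)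

(* Defs.v *)
From HB Require Import structures.
From mathcomp Require Import all_boot all_order all_algebra.
From mathcomp Require Import all_classical all_reals all_analysis.
Set Implicit Arguments. Unset Strict Implicit. Unset Printing Implicit Defensive.
Import Order.TTheory GRing.Theory Num.Theory.
Local Open Scope ring_scope.

Section Kitaev.
Variable R : realType.

(* Position (0-based) of the Majorana operator b_n (n = 1..2L) in the ordered
   vector  b = (b_1, b_3, ..., b_{2L-1}, b_2, b_4, ..., b_{2L})^t. *)
Definition maj_pos (L n : nat) : nat :=
  if odd n then n./2 else (L + n./2 - 1)%N.

(* The Majorana form of H^Kit_Lambda(alpha) as a list of terms (c, p, q),
   each standing for  i * c * b_p b_q :
     i w sum_{j=1}^{L-1} b_{2j} b_{2j+1} + i w cos(alpha) b_{2L} b_1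
       - i w sin(alpha) b_{2L} b_2. *)
Definition kit_terms (L : nat) (w alpha : R) : seq (R * nat * nat) :=
  [seq (w, (2 * j)%N, (2 * j).+1) | j <- iota 1 (L - 1)] ++
  [:: (w * cos alpha, (2 * L)%N, 1%N); (- (w * sin alpha), (2 * L)%N, 2%N)].

(* The real skew-symmetric matrix A with H = (i/2) b^t A b: a term
   i c b_p b_q (p <> q, anticommuting Majoranas) equals
   (i/2) (c b_p b_q - c b_q b_p), i.e. contributes c to A_{pq} and -c to A_{qp}. *)
Definition A_Lambda (L : nat) (w alpha : R) : 'M[R]_(2 * L) :=
  \matrix_(k, l)
    \sum_(t <- kit_terms L w alpha)
      (t.1.1 * (((k == maj_pos L t.1.2 :> nat) && (l == maj_pos L t.2 :> nat))%:R
              - ((k == maj_pos L t.2 :> nat) && (l == maj_pos L t.1.2 :> nat))%:R)).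

(* Z_2-valued spectral flow between invertible real skew-symmetric T0, T1:
   Sf_2(T0,T1) = sgn det M for any invertible real M with T1 = M T0 M^*.
   [Sf2_is T0 T1 s] says that Sf_2(T0,T1) is well defined (endpoints invertible
   skew-symmetric, such an M exists) and equals s. *)
Definition Sf2_is (n : nat) (T0 T1 : 'M[R]_n) (s : R) : Prop :=
  [/\ T0^T = - T0, T1^T = - T1, T0 \in unitmx & T1 \in unitmx] /\
  (exists M : 'M[R]_n, M \in unitmx /\ T1 = M *m T0 *m M^T) /\
  (forall M : 'M[R]_n, M \in unitmx -> T1 = M *m T0 *m M^T ->
        Num.sg (\det M) = s).

End Kitaev.

(* Main.v *)
Require Import Defs.
From HB Require Import structures.
From mathcomp Require Import all_boot all_order all_algebra.
From mathcomp Require Import all_classical all_reals all_analysis.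
From mathcomp Require Import complex.
From mathcomp Require Import ring lra zify.
Import Order.TTheory GRing.Theory Num.Theory.
Local Open Scope ring_scope.

Section Rim.
Variable R : rcfType.

Lemma cblock_det_ge0 {n} (X Y : 'M[R]_n) : 0 <= \det (block_mx X (- Y) Y X).
Proof.
pose f := real_complex R.
set K := block_mx _ _ _ _.
have E : \det (map_mx f K) = ((\det K)%:C)%C by rewrite det_map_mx.
rewrite -ler0c -E.
pose X' := map_mx f X; pose Y' := map_mx f Y.
have HK : map_mx f K = block_mx X' (- Y') Y' X' by rewrite map_block_mx map_mxN.
pose i0 : R[i] := 'i%C.
pose Lm : 'M[R[i]]_(n + n) := block_mx 1%:M 0 (- i0%:M) 1%:M.
pose Rm : 'M[R[i]]_(n + n) := block_mx 1%:M 0 (i0%:M) 1%:M.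
have dL : \det Lm = 1 by rewrite det_lblock !det1 mulr1.
have dR : \det Rm = 1 by rewrite det_lblock !det1 mulr1.
have ii : i0 * i0 = -1 by rewrite -expr2 sqr_i.
have HB : Lm *m map_mx f K *m Rm =
   block_mx (X' - i0 *: Y') (- Y') 0 (X' + i0 *: Y').
  rewrite HK !mulmx_block !mulmx0 !mul0mx !mulmx1 !mul1mx !addr0 !add0r.
  rewrite !mulNmx !mul_scalar_mx !mul_mx_scalar.
  congr block_mx.
  - by apply/matrixP => a b; rewrite !mxE mulrN opprK mulrDr mulrA ii; ring.
  - by apply/matrixP => a b; rewrite !mxE mulrN opprK addrC.
have -> : \det (map_mx f K) = \det (Lm *m map_mx f K *m Rm)
  by rewrite !det_mulmx dL dR mul1r mulr1.
rewrite HB det_ublock.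
have -> : X' - i0 *: Y' = map_mx (@conjc R) (X' + i0 *: Y').
  apply/matrixP => a b; rewrite !mxE /=.
  rewrite /f /i0; apply/eqP; rewrite eq_complex /=; apply/andP; split; apply/eqP; ring.
rewrite det_map_mx mulrC; exact: mulcJ_ge0.
Qed.

End Rim.

Section Rim2.
Variable R : rcfType.

Lemma rowsq n (u : 'rV[R]_n) : (u *m u^T) 0 0 = \sum_j u 0 j ^+ 2.
Proof. by rewrite !mxE; apply: eq_bigr => j _; rewrite !mxE expr2. Qed.

Lemma det_gram_nz n (N : 'M[R]_n) t : 0 <= t -> \det (t *: (N *m N^T) + 1) != 0.
Proof.
move=> t0; apply/negP => /det0P [v vn0 hv].
have : (v *m (t *: (N *m N^T) + 1) *m v^T) 0 0 = 0 by rewrite hv mul0mx mxE.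
have -> : v *m (t *: (N *m N^T) + 1) *m v^T = t *: ((v *m N) *m (v *m N)^T) + v *m v^T.
  rewrite mulmxDr mulmx1 mulmxDl trmx_mul.
  by rewrite -scalemxAr -scalemxAl !mulmxA.
rewrite mxE [in X in X + _]mxE !rowsq.
have h1 : 0 <= \sum_j (v *m N) 0 j ^+ 2 by apply: sumr_ge0 => j _; exact: sqr_ge0.
have h2 : 0 < \sum_j v 0 j ^+ 2.
  rewrite lt_def sumr_ge0 ?andbT => [|j _]; last exact: sqr_ge0.
  apply/negP => /eqP /(psumr_eq0P (fun j _ => sqr_ge0 (v 0 j))) H.
  move/negP: vn0; apply; apply/eqP/rowP => j; rewrite mxE.
  by apply/eqP; rewrite -sqrf_eq0; apply/eqP; exact: H.
move=> H; nra.
Qed.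

Lemma det_gram_pos n (N : 'M[R]_n) : 0 < \det (N *m N^T + 1).
Proof.
pose Mp : 'M[{poly R}]_n := \matrix_(i, j) ((N *m N^T) i j *: 'X + (i == j)%:R).
pose p := \det Mp.
have ev t : p.[t] = \det (t *: (N *m N^T) + 1).
  rewrite /p -horner_evalE -det_map_mx; congr (\det _); apply/matrixP => i j.
  rewrite !mxE /= horner_evalE hornerD hornerZ hornerX.
  by rewrite hornerMn hornerC mulrC.
rewrite ltNge; apply/negP => hle.
have [|x /andP[x0 x1] rx] := @poly_ivt R (- p) 0 1 ler01.
  rewrite !hornerN !ev scale0r add0r det1 scale1r lerN10 /=.
  by rewrite oppr_ge0.
move: (@det_gram_nz _ N x x0); rewrite -ev.
by move: rx; rewrite /root hornerN oppr_eq0 => ->.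
Qed.

Lemma rim n (N : 'M[R]_(n + n)) :
  N *m block_mx 0 (- 1%:M) 1%:M 0 *m N^T = block_mx 0 (- 1%:M) 1%:M 0 ->
  0 < \det N.
Proof.
set J := block_mx _ _ _ _ => HN.
have JJ : J *m J = - 1%:M.
  rewrite mulmx_block !mulmx0 !mul0mx !add0r !addr0 mulmxN mulNmx !mulmx1.
  by rewrite (scalar_mx_block n n) opp_block_mx oppr0.
have key : N *m N^T + 1%:M = N *m (N^T - J *m N^T *m J).
  by rewrite mulmxBr !mulmxA HN JJ opprK.
set A := ulsubmx N^T; set B := ursubmx N^T.
set C := dlsubmx N^T; set D := drsubmx N^T.
have E : N^T - J *m N^T *m J =
    block_mx (A + D) (- (C - B)) (C - B) (A + D).
  rewrite -[N^T]submxK -/A -/B -/C -/D.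
  rewrite !mulmx_block !mulmx0 !mul0mx !add0r !addr0 !mulmxN !mulNmx !mulmx1 !mul1mx.
  rewrite opp_block_mx add_block_mx !opprK.
  by rewrite opprB (addrC D).
rewrite E in key.
have hg := @det_gram_pos _ N.
rewrite key det_mulmx in hg.
have hk := @cblock_det_ge0 R n (A + D) (C - B).
rewrite ltNge; apply/negP => hN.
have : \det N * \det (block_mx (A + D) (- (C - B)) (C - B) (A + D)) <= 0.
  exact: mulr_le0_ge0.
by rewrite leNgt hg.
Qed.

End Rim2.

Section Ent.
Variable R : realType.

Definition Gn (L : nat) (w c : R) (k m : nat) : R :=
  w * ((k == L + m - 1)%N && (0 < m < L)%N)%:R
  - w * ((m == L + k - 1)%N && (0 < k < L)%N)%:R
  + w * c * ((k == L + L - 1)%N && (m == 0)%N)%:R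
  - w * c * ((k == 0)%N && (m == L + L - 1)%N)%:R.

Lemma mp_even L j : maj_pos L (2 * j) = (L + j - 1)%N.
Proof. by rewrite /maj_pos oddM /= mul2n doubleK. Qed.

Lemma mp_odd L j : maj_pos L (2 * j).+1 = j.
Proof. by rewrite /maj_pos /= oddM /= mul2n uphalf_double. Qed.

Lemma sum_ind (s : seq nat) m (b : bool) : uniq s ->
  \sum_(j <- s) ((j == m) && b)%:R = ((m \in s) && b)%:R :> R.
Proof.
elim: s => [|x s IH] /=; first by rewrite big_nil.
move=> /andP[xs us]; rewrite big_cons IH // in_cons.
case: (eqVneq x m) => [<-|hxm] /=; first by rewrite (negbTE xs) /= addr0.
all: try by rewrite ?add0r.
Qed.

Lemma A_entry L w a (hs : sin a = 0) (hL : (0 < L)%N) (k m : 'I_(2 * L)) :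
  A_Lambda L w a k m = Gn L w (cos a) k m.
Proof.
rewrite mxE /kit_terms big_cat big_map /= !big_cons big_nil /=.
under eq_bigr => j _ do rewrite mp_even mp_odd.
rewrite (mp_even L L) (mp_even L 1) /= hs mulr0 oppr0 mul0r addr0.
rewrite -big_distrr /= sumrB.
have -> : maj_pos L 1 = 0%N by [].
rewrite addr0.
have h1 : \sum_(j <- iota 1 (L - 1)) ((k == (L + j - 1)%N :> nat) && (m == j :> nat))%:R
     = ((k == (L + m - 1)%N :> nat) && (0 < m < L)%N)%:R :> R.
  transitivity (\sum_(j <- iota 1 (L - 1)) ((j == m :> nat) && (k == (L + m - 1)%N :> nat))%:R : R).
    apply: eq_bigr => j _; case: (eqVneq j m) => [->|hjm]; first by rewrite andbT.
    by rewrite andbF.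
  rewrite sum_ind ?iota_uniq // mem_iota andbC.
  by have -> : (1 + (L - 1))%N = L by lia.
have h2 : \sum_(j <- iota 1 (L - 1)) ((k == j :> nat) && (m == (L + j - 1)%N :> nat))%:R
     = ((m == (L + k - 1)%N :> nat) && (0 < k < L)%N)%:R :> R.
  transitivity (\sum_(j <- iota 1 (L - 1)) ((j == k :> nat) && (m == (L + k - 1)%N :> nat))%:R : R).
    apply: eq_bigr => j _; case: (eqVneq j k) => [->|hjk]; first by [].
    by [].
  rewrite sum_ind ?iota_uniq // mem_iota andbC.
  by have -> : (1 + (L - 1))%N = L by lia.
rewrite h1 h2 /Gn.
ring.
Qed.

End Ent.
Arguments Gn {R}.
Arguments A_entry {R L w a}.


Ltac bsplit := match goal with |- context [ GRing.natmul _ (nat_of_bool ?b) ] =>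
  lazymatch b with true => fail | false => fail | _ =>
  let H := fresh "H" in case: (boolP b) => H; [rewrite ?H | rewrite ?(negbTE H)];
  try (exfalso; lia) end end.
Ltac solve_leaf := first [ by (exfalso; lia) | by ring | by (rewrite ?mulr0n ?mulr1n; ring) ].

Section Conc.
Variable R : realType.
Variable l : nat.
Local Notation L := l.+1.
Variable w : R.

Lemma trZ m n (a : R) (A : 'M[R]_(m, n)) : (a *: A)^T = a *: A^T.
Proof. by apply/matrixP => i j; rewrite !mxE. Qed.

Definition Sc (c : R) : 'M[R]_L :=
  \matrix_(i, j) ((j == i.+1 :> nat)%:R + c * ((i == l :> nat) && (j == 0 :> nat))%:R).

Definition Tc c : 'M[R]_(L + L) := block_mx 0 (- (w *: (Sc c)^T)) (w *: Sc c) 0.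
Definition Qc c : 'M[R]_(L + L) := block_mx w%:M 0 0 (Sc c).
Definition J : 'M[R]_(L + L) := block_mx 0 (- 1%:M) 1%:M 0.

Lemma T_QJQ c : Tc c = Qc c *m J *m (Qc c)^T.
Proof.
rewrite /Tc /Qc /J tr_block_mx !trmx0 tr_scalar_mx !mulmx_block.
rewrite !mulmx0 !mul0mx !addr0 !add0r !mulmxN !mulmx1.
rewrite !mul0mx mulNmx mul_scalar_mx mul_mx_scalar.
by [].
Qed.

Definition sucL (i : 'I_L) : 'I_L := if (i == l :> nat) then ord0 else inord i.+1.
Definition gL c (i : 'I_L) : R := if (i == l :> nat) then c else 1.

Lemma ScE c i j : Sc c i j = gL c i * (j == sucL i)%:R.
Proof.
rewrite mxE /gL /sucL; case: (eqVneq (i : nat) l) => [hi|hi].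
  have -> : (j == i.+1 :> nat) = false by apply/negbTE; have := ltn_ord j; lia.
  by rewrite add0r.
rewrite /= mulr0 addr0 mul1r.
have hi' : (i.+1 < L)%N by have := ltn_ord i; lia.
by rewrite -[j == inord _]/(nat_of_ord j == nat_of_ord (inord i.+1 : 'I_L)) inordK.
Qed.

Lemma sucL_val i : val (sucL i) = if (i == l :> nat) then 0%N else i.+1.
Proof.
rewrite /sucL; case: (eqVneq (i : nat) l) => hi //=.
by rewrite inordK //; have := ltn_ord i; lia.
Qed.

Lemma sucL_inj : injective sucL.
Proof.
move=> i k /(congr1 val); rewrite !sucL_val => h; apply/val_inj.
have hi := ltn_ord i; have hk := ltn_ord k.
move: h; case: (eqVneq (i : nat) l); case: (eqVneq (k : nat) l) => /=; lia.
Qed.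

Lemma Sc_orth c : c * c = 1 -> Sc c *m (Sc c)^T = 1%:M.
Proof.
move=> cc; apply/matrixP => i k; rewrite mxE [in RHS]mxE.
under eq_bigr => j _ do rewrite [X in _ * X]mxE.
under eq_bigr => j _ do rewrite !ScE.
rewrite (bigD1 (sucL i)) //= big1 ?addr0 => [|j hj]; last first.
  by rewrite (negbTE hj) mulr0 mul0r.
rewrite eqxx mulr1.
case: (eqVneq i k) => [<-|hik].
  rewrite eqxx mulr1 /gL; case: ifP => _ //; rewrite mulr1.
  by [].
have -> : (sucL i == sucL k) = false.
  by apply/negbTE; apply: contra hik => /eqP /sucL_inj ->.
by rewrite mulr0 mulr0.
Qed.

Lemma Sc_unit c : c * c = 1 -> Sc c \in unitmx.
Proof. by move/Sc_orth/mulmx1_unit => []. Qed.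

Lemma J_unit : J \in unitmx.
Proof.
have : J *m (- J) = 1%:M.
  rewrite /J opp_block_mx !oppr0 opprK mulmx_block !mulmx0 !mul0mx !addr0 !add0r.
  by rewrite mulmxN mulNmx !mulmx1 opprK (scalar_mx_block L L).
by move/mulmx1_unit => [].
Qed.

Hypothesis wn0 : w != 0.

Lemma Qc_unit c : c * c = 1 -> Qc c \in unitmx.
Proof.
move=> cc; rewrite unitmxE /Qc det_ublock det_scalar unitrM.
by rewrite -unitmxE Sc_unit // andbT unitfE expf_neq0.
Qed.

Lemma Tc_unit c : c * c = 1 -> Tc c \in unitmx.
Proof. by move=> cc; rewrite T_QJQ !unitmx_mul unitmx_tr Qc_unit // J_unit. Qed.

Lemma Tc_skew c : (Tc c)^T = - Tc c.
Proof.
by rewrite /Tc tr_block_mx !trmx0 opp_block_mx !oppr0 opprK raddfN /= !trZ trmxK.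
Qed.

Definition dM0 : 'rV[R]_L := \row_i (if i == ord0 then -1 else 1).
Definition M0 : 'M[R]_(L + L) := block_mx (diag_mx dM0) 0 0 1%:M.

Lemma M0M0 : M0 *m M0 = 1%:M.
Proof.
rewrite /M0 mulmx_block !mulmx0 !mul0mx !addr0 !add0r mulmx1 mulmx_diag.
have -> : \row_j (dM0 0 j * dM0 0 j) = const_mx 1.
  by apply/rowP => j; rewrite !mxE; case: ifP => _; rewrite ?mulrNN ?mulr1.
by rewrite diag_const_mx (scalar_mx_block L L).
Qed.

Lemma detM0 : \det M0 = -1.
Proof.
rewrite /M0 det_ublock det1 mulr1 det_diag (bigD1 ord0) //= big1 ?mulr1.
  by rewrite mxE eqxx.
by move=> i hi; rewrite mxE (negbTE hi).
Qed.

Lemma M0_unit : M0 \in unitmx.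
Proof. by rewrite unitmxE detM0 unitrN unitr1. Qed.

Lemma S1D : Sc 1 *m diag_mx dM0 = Sc (-1).
Proof.
rewrite mul_mx_diag; apply/matrixP => i j; rewrite !mxE.
rewrite -[j == ord0]/(j == 0 :> nat).
case: (eqVneq (j : nat) 0) => [->|hj]; last by rewrite !andbF !mulr0 !mulr1.
rewrite andbT.
have -> : (0 == i.+1 :> nat) = false by [].
rewrite add0r mul1r mulrN1 mulN1r.
by rewrite mulr0n sub0r.
Qed.

Lemma M0T : M0 *m Tc 1 *m M0^T = Tc (-1).
Proof.
rewrite /M0 /Tc tr_block_mx !trmx0 trmx1 tr_diag_mx !mulmx_block.
rewrite !mulmx0 !mul0mx !addr0 !add0r !mulmx1 !mul1mx.
rewrite mul0mx mulmxN -scalemxAl -scalemxAr S1D.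
by rewrite -S1D trmx_mul tr_diag_mx.
Qed.

Lemma sf2_T : Sf2_is (Tc 1) (Tc (-1)) (-1).
Proof.
have c1 : (1 : R) * 1 = 1 by rewrite mulr1.
have c2 : (-1 : R) * (-1) = 1 by rewrite mulrNN mulr1.
split; [split|split].
- exact: Tc_skew.
- exact: Tc_skew.
- exact: Tc_unit.
- exact: Tc_unit.
- by exists M0; split; [exact: M0_unit | rewrite M0T].
move=> M Mu HM.
pose N := M0 *m M.
have HN : N *m Tc 1 *m N^T = Tc 1.
  have -> : N *m Tc 1 *m N^T = M0 *m (M *m Tc 1 *m M^T) *m M0^T
    by rewrite /N trmx_mul !mulmxA.
  rewrite -HM -M0T.
  have -> : M0 *m (M0 *m Tc 1 *m M0^T) *m M0^T = (M0 *m M0) *m Tc 1 *m (M0 *m M0)^T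
    by rewrite trmx_mul !mulmxA.
  by rewrite M0M0 mul1mx trmx1 mulmx1.
pose Q := Qc 1.
have Qu : Q \in unitmx by exact: Qc_unit.
pose P := invmx Q *m N *m Q.
have HP : P *m J *m P^T = J.
  have -> : P *m J *m P^T = invmx Q *m (N *m (Q *m J *m Q^T) *m N^T) *m (invmx Q)^T
    by rewrite /P !trmx_mul !mulmxA.
  rewrite -T_QJQ HN T_QJQ.
  have -> : invmx Q *m (Q *m J *m Q^T) *m (invmx Q)^T
      = (invmx Q *m Q) *m J *m (Q^T *m (invmx Q)^T) by rewrite !mulmxA.
  by rewrite -trmx_mul mulVmx // mul1mx trmx1 mulmx1.
have hP := @rim R _ P HP.
have dP : \det P = \det N.
  rewrite /P !det_mulmx det_inv mulrAC mulVf ?mul1r //.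
  by rewrite -unitfE -unitmxE.
rewrite dP /N det_mulmx detM0 mulN1r oppr_gt0 in hP.
exact: ltr0_sg.
Qed.


Lemma T_entry c (k m : 'I_(L + L)) : Tc c k m = Gn L w c k m.
Proof.
rewrite /Gn.
case: (split_ordP k) => i ->; case: (split_ordP m) => j ->;
  rewrite ?block_mxEul ?block_mxEur ?block_mxEdl ?block_mxEdr !mxE /=;
  have := ltn_ord i; have := ltn_ord j => hj hi.
all: repeat bsplit; solve_leaf.
Qed.

Lemma main_gen n (e : n = (L + L)%N) (T0 T1 : 'M[R]_n) :
  (forall k m : 'I_n, T0 k m = Gn L w 1 k m) ->
  (forall k m : 'I_n, T1 k m = Gn L w (-1) k m) ->
  Sf2_is T0 T1 (-1).
Proof.
subst n => h0 h1.
have -> : T0 = Tc 1 by apply/matrixP => k m; rewrite h0 T_entry.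
have -> : T1 = Tc (-1) by apply/matrixP => k m; rewrite h1 T_entry.
exact: sf2_T.
Qed.

End Conc.

Theorem proposition3p12 (R : realType) (L : nat) (w theta : R) :
  (2 <= L)%N -> w != 0 ->
  Sf2_is (A_Lambda L w 0) (A_Lambda L w pi) (-1).
Proof.
case: L => [|[|l]] // _ wn0.
have e : (2 * l.+2)%N = (l.+2 + l.+2)%N by lia.
apply: (@main_gen R l.+1 w wn0 _ e) => k m.
- by rewrite (A_entry (sin0 R)) // cos0.
- by rewrite (A_entry (sinpi R)) // cospi.
Qed.
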